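(* For every integer $n\geq 7$ there exist trees $T_1$ and $T_2$ on $n$ vertices such that $\psi(T_1)=\psi(T_2)$ but $T_1$ and $T_2$ are not isomorphic.
   Context: All graphs are finite, simple and nonempty. For a graph $G$ and a positive integer $k$, a $k$-path vertex cover ($k$-PVC) of $G$ is a set $S$ of vertices such that every path on $k$ vertices in $G$ contains at least one vertex of $S$ (if $G$ has no path on $k$ vertices, the empty set is a $k$-PVC). $\psi_k(G)$ denotes the minimum cardinality of a $k$-PVC of $G$. For a graph $G$ on $n$ vertices, the path sequence of $G$ is $\psi(G)=(\psi_1(G),\psi_2(G),\ldots,\psi_n(G))$. *)

(* Defs.v *)
From mathcomp Require Import all_boot.
Set Implicit Arguments. Unset Strict Implicit. Unset Printing Implicit Defensive.

Section Graphs.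
Variable T : finType.

Definition simple_graph (e : rel T) : Prop :=
  symmetric e /\ irreflexive e.

Definition is_gpath (e : rel T) (s : seq T) : bool :=
  if s is x :: p then path e x p && uniq s else false.

Definition is_gcycle (e : rel T) (s : seq T) : bool :=
  [&& 3 <= size s, uniq s & cycle e s].

Definition connected_graph (e : rel T) : Prop := forall x y : T, connect e x y.

Definition acyclic_graph (e : rel T) : Prop := forall s : seq T, ~~ is_gcycle e s.

Definition is_tree (e : rel T) : Prop :=
  simple_graph e /\ connected_graph e /\ acyclic_graph e.

(* S is a k-path vertex cover: every path on k vertices meets S. *)
Definition is_kpvc (e : rel T) (k : nat) (S : {set T}) : bool :=
  [forall t : k.-tuple T, is_gpath e t ==> has (fun x => x \in S) t].

(* psi_k(G): minimum cardinality of a k-PVC (setT is always one). *)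
Definition psi (e : rel T) (k : nat) : nat :=
  \big[minn/#|T|]_(S : {set T} | is_kpvc e k S) #|S|.

End Graphs.

Definition isomorphic (T1 T2 : finType) (e1 : rel T1) (e2 : rel T2) : Prop :=
  exists f : T1 -> T2, bijective f /\ forall x y, e1 x y = e2 (f x) (f y).

(* Main.v *)
Require Import Defs.
From mathcomp Require Import all_boot zify.
Set Implicit Arguments. Unset Strict Implicit. Unset Printing Implicit Defensive.

Lemma bigmin_le_seq (I : eqType) (r : seq I) (P : pred I) F x j :
  j \in r -> P j -> \big[minn/x]_(i <- r | P i) F i <= F j.
Proof.
elim: r => //= a r IH; rewrite inE big_cons => /orP[/eqP<- Pj|jr Pj].
  by rewrite Pj geq_minl.
case: (P a); last exact: IH.
exact: leq_trans (geq_minr _ _) (IH jr Pj).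
Qed.

Lemma psi_le (T : finType) (e : rel T) k (S : {set T}) : is_kpvc e k S -> psi e k <= #|S|.
Proof. move=> h; rewrite /psi; apply: bigmin_le_seq => //; exact: mem_index_enum. Qed.

Lemma psi_ge (T : finType) (e : rel T) k c : c <= #|T| ->
  (forall S : {set T}, is_kpvc e k S -> c <= #|S|) -> c <= psi e k.
Proof.
move=> hT hS; rewrite /psi; elim/big_ind: _ => //.
  by move=> a b ha hb; rewrite leq_min ha hb.
Qed.

Lemma inordE m (x : 'I_m.+1) i : i <= m -> (x == inord i) = (nat_of_ord x == i).
Proof.
move=> h; apply/eqP/eqP => [->|hx]; first by rewrite inordK.
by apply: val_inj; rewrite /= inordK.
Qed.

Lemma uniq_neq (T : eqType) (x0 : T) (s : seq T) i j : uniq s -> i < size s -> j < size s ->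
  i != j -> nth x0 s i != nth x0 s j.
Proof. by move=> U hi hj; rewrite nth_uniq. Qed.

Section Gen.
Variable m : nat.
Variable e : rel 'I_m.+4.+3.
Hypothesis esy : symmetric e.
Hypothesis H1 : forall x y, e x y -> (nat_of_ord x == 1) || (nat_of_ord x == 2) || (nat_of_ord y == 1) || (nat_of_ord y == 2).
Hypothesis H2 : forall x y z, e x y -> e x z -> y != z -> nat_of_ord x <= 2.
Hypothesis H3 : forall x y, e x y -> nat_of_ord x <= 2 -> nat_of_ord y <= 2 -> (nat_of_ord x == 0) || (nat_of_ord y == 0).

Lemma cover12 s : 2 <= size s -> is_gpath e s ->
  has (fun x => x \in [set (inord 1 : 'I_m.+4.+3); inord 2]) s.
Proof.
case: s => [|x [|y s]] //= _ /andP[/andP[exy _] _].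
rewrite !in_set2 !inordE //.
by have := H1 exy; lia.
Qed.

Lemma cover0 s : 4 <= size s -> is_gpath e s ->
  has (fun x => x \in [set (inord 0 : 'I_m.+4.+3)]) s.
Proof.
case: s => [|x1 [|x2 [|x3 [|x4 s]]]] //= _ /andP[/and4P[e12 e23 e34 _] U].
have {}U : uniq [:: x1, x2, x3, x4 & s] := U.
have n13 := uniq_neq x1 (i:=0) (j:=2) U erefl erefl erefl.
have n24 := uniq_neq x1 (i:=1) (j:=3) U erefl erefl erefl.
have h2 : nat_of_ord x2 <= 2 by exact: (H2 (etrans (esy _ _) e12) e23).
have h3 : nat_of_ord x3 <= 2 by exact: (H2 (etrans (esy _ _) e23) e34).
have := H3 e23 h2 h3; rewrite !in_set1 !inordE //; clear; lia.
Qed.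

Lemma nopath6 s : 6 <= size s -> ~~ is_gpath e s.
Proof.
case: s => [|x1 [|x2 [|x3 [|x4 [|x5 [|x6 s]]]]]] //= _.
apply/negP => /andP[/and5P[e12 e23 e34 e45 /andP[e56 _]] U].
have {}U : uniq [:: x1, x2, x3, x4, x5, x6 & s] := U.
have n13 := uniq_neq x1 (i:=0) (j:=2) U erefl erefl erefl.
have n24 := uniq_neq x1 (i:=1) (j:=3) U erefl erefl erefl.
have n35 := uniq_neq x1 (i:=2) (j:=4) U erefl erefl erefl.
have n46 := uniq_neq x1 (i:=3) (j:=5) U erefl erefl erefl.
have h2 : nat_of_ord x2 <= 2 by exact: (H2 (etrans (esy _ _) e12) e23).
have h3 : nat_of_ord x3 <= 2 by exact: (H2 (etrans (esy _ _) e23) e34).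
have h4 : nat_of_ord x4 <= 2 by exact: (H2 (etrans (esy _ _) e34) e45).
have h5 : nat_of_ord x5 <= 2 by exact: (H2 (etrans (esy _ _) e45) e56).
have := H3 e23 h2 h3; have := H3 e34 h3 h4; have := H3 e45 h4 h5.
have n34 := uniq_neq x1 (i:=2) (j:=3) U erefl erefl erefl.
move: n24 n35 n34; rewrite /= -!val_eqE /=.
clear; lia.
Qed.

Notation v i := (inord i : 'I_m.+4.+3).
Hypothesis P31 : e (v 3) (v 1).
Hypothesis P10 : e (v 1) (v 0).
Hypothesis P02 : e (v 0) (v 2).
Hypothesis P25 : e (v 2) (v 5).
Hypothesis P26 : e (v 2) (v 6).

Lemma vneq i j : i <= m.+4.+2 -> j <= m.+4.+2 -> i != j -> v i != v j.
Proof. by move=> hi hj hij; rewrite inordE // inordK. Qed.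

Lemma vneqF i j : i <= m.+4.+2 -> j <= m.+4.+2 -> i != j -> (v i == v j) = false.
Proof. by move=> hi hj hij; apply/negbTE/vneq. Qed.

Lemma two_le (S : {set 'I_m.+4.+3}) a b : a \in S -> b \in S -> a != b -> 2 <= #|S|.
Proof.
move=> aS bS ab; rewrite -[2]/((true : nat).+1) -ab -cards2.
by apply: subset_leq_card; rewrite subUset !sub1set aS bS.
Qed.

Lemma psi1 : psi e 1 = m.+4.+3.
Proof.
apply/eqP; rewrite eqn_leq; apply/andP; split.
  rewrite -[X in _ <= X]card_ord -cardsT; apply: psi_le.
  by apply/forallP => t; apply/implyP => _; case: t => [[|x s]] //= _; rewrite in_setT.
apply: psi_ge; first by rewrite card_ord.
move=> S /forallP hS; rewrite -[X in X <= _]card_ord -cardsT; apply: subset_leq_card.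
apply/subsetP => x _; have := hS [tuple x]; rewrite /= orbF; exact.
Qed.

Lemma psi23 k : 2 <= k <= 3 -> psi e k = 2.
Proof.
move=> hk; apply/eqP; rewrite eqn_leq; apply/andP; split.
  apply: (leq_trans (psi_le (S := [set v 1; v 2]) _)); last by rewrite cards2 vneq.
  apply/forallP => t; apply/implyP; apply: cover12; rewrite size_tuple; lia.
apply: psi_ge; first by rewrite card_ord.
move=> S /forallP hS.
have : k = 2 \/ k = 3 by lia.
case=> ?; subst k.
  have := hS [tuple v 1; v 3]; have := hS [tuple v 2; v 5]; rewrite /= !orbF.
  rewrite (etrans (esy _ _) P31) P25 !inE (vneq (i:=1) (j:=3)) //.
  rewrite (vneq (i:=2) (j:=5)) //=.
  by case/orP=> hb; case/orP=> ha; apply: (two_le ha hb); rewrite vneq.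
have := hS [tuple v 3; v 1; v 0]; have := hS [tuple v 5; v 2; v 6]; rewrite /= !orbF.
rewrite (etrans (esy _ _) P25) P26 P31 P10 !inE !vneqF //=.
by case/orP=> [hb|/orP[hb|hb]]; case/orP=> [ha|/orP[ha|ha]]; apply: (two_le ha hb); rewrite vneq.
Qed.

Lemma psi45 k : 4 <= k <= 5 -> psi e k = 1.
Proof.
move=> hk; apply/eqP; rewrite eqn_leq; apply/andP; split.
  apply: (leq_trans (psi_le (S := [set v 0]) _)); last by rewrite cards1.
  apply/forallP => t; apply/implyP; apply: cover0; rewrite size_tuple; lia.
apply: psi_ge; first by rewrite card_ord.
move=> S /forallP hS; rewrite card_gt0; apply/set0Pn.
have : k = 4 \/ k = 5 by lia.
case=> ?; subst k.
  have /implyP hp := hS [tuple v 3; v 1; v 0; v 2].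
  have /hasP[x _ hx] : has (fun x => x \in S) [tuple v 3; v 1; v 0; v 2].
    by apply: hp; rewrite /= P31 P10 P02 !inE !vneqF.
  by exists x.
have /implyP hp := hS [tuple v 3; v 1; v 0; v 2; v 5].
have /hasP[x _ hx] : has (fun x => x \in S) [tuple v 3; v 1; v 0; v 2; v 5].
  by apply: hp; rewrite /= P31 P10 P02 P25 !inE !vneqF.
by exists x.
Qed.

Lemma psi6 k : 6 <= k -> psi e k = 0.
Proof.
move=> hk; apply/eqP; rewrite -leqn0 -(cards0 'I_m.+4.+3); apply: psi_le.
apply/forallP => t; apply/implyP => h; exfalso; move: h; apply/negP.
by apply: nopath6; rewrite size_tuple.
Qed.


Lemma all_le2 s : uniq s -> cycle e s -> 3 <= size s -> forall x, x \in s -> nat_of_ord x <= 2.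
Proof.
move=> U C hs x /rot_to[i s' hr].
have U' : uniq (x :: s') by rewrite -hr rot_uniq.
have C' : cycle e (x :: s') by rewrite -hr rot_cycle.
have hs' : 3 <= size (x :: s') by rewrite -hr size_rot.
case: s' U' C' hs' {hr} => [|y [|z t]] //= U' C' _.
rewrite rcons_path /= in C'.
case/and4P: C' => exy _ _ ewx.
have hw := mem_last z t.
have yw : y != last z t.
  apply/eqP => hyw; move: U'; rewrite hyw.
  by rewrite /= hw /= andbF.
exact: (H2 exy (etrans (esy _ _) ewx) yw).
Qed.

Lemma acyc : acyclic_graph e.
Proof.
move=> s; apply/negP => /and3P[hs U C].
have hle := all_le2 U C hs.
have : size s <= 3.
  rewrite -(size_map (@nat_of_ord _)) -[3]/(size (iota 0 3)).
  apply: uniq_leq_size; first by rewrite (map_inj_uniq val_inj).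
  move=> a /mapP[x hx ->]; rewrite mem_iota /=; have := hle x hx; lia.
case: s hs U C hle => [|a [|b [|c [|d t]]]] //= _ U C hle _.
case/and4P: C => eab ebc eca _.
have ha := hle a; have hb := hle b; have hc := hle c.
rewrite !inE !eqxx ?orbT in ha hb hc.
have := H3 eab (ha erefl) (hb erefl); have := H3 ebc (hb erefl) (hc erefl).
have := H3 eca (hc erefl) (ha erefl).
move: U; rewrite /= !inE -!val_eqE /=; clear; lia.
Qed.
End Gen.

Definition adj (p x y : nat) : bool :=
  [|| (x == 0) && ((y == 1) || (y == 2)),
      (x == 1) && (y == 3),
      (y == 4) && (x == p) | (5 <= y) && (x == 2) ].
Definition adjs p x y := adj p x y || adj p y x.
Definition E m p : rel 'I_m.+4.+3 := fun x y => adjs p x y.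
Arguments E : clear implicits.

Section Trees.
Variable m p : nat.
Hypothesis hp : (p == 1) || (p == 2).
Notation v i := (inord i : 'I_m.+4.+3).

Lemma Esym : symmetric (E m p).
Proof. by move=> x y; rewrite /E /adjs orbC. Qed.
Lemma Eirr : irreflexive (E m p).
Proof. move=> x; rewrite /E /adjs /adj; move: hp; clear; lia. Qed.
Lemma EH1 x y : E m p x y -> (nat_of_ord x == 1) || (nat_of_ord x == 2) || (nat_of_ord y == 1) || (nat_of_ord y == 2).
Proof. rewrite /E /adjs /adj; move: hp; clear; lia. Qed.
Lemma EH2 x y z : E m p x y -> E m p x z -> y != z -> nat_of_ord x <= 2.
Proof. rewrite /E /adjs /adj -val_eqE /=; move: hp; clear; lia. Qed.
Lemma EH3 x y : E m p x y -> nat_of_ord x <= 2 -> nat_of_ord y <= 2 -> (nat_of_ord x == 0) || (nat_of_ord y == 0).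
Proof. rewrite /E /adjs /adj; move: hp; clear; lia. Qed.
Lemma Ev i j : i <= m.+4.+2 -> j <= m.+4.+2 -> E m p (v i) (v j) = adjs p i j.
Proof. by move=> hi hj; rewrite /E !inordK. Qed.
Lemma EP31 : E m p (v 3) (v 1). Proof. by rewrite Ev. Qed.
Lemma EP10 : E m p (v 1) (v 0). Proof. by rewrite Ev. Qed.
Lemma EP02 : E m p (v 0) (v 2). Proof. by rewrite Ev. Qed.
Lemma EP25 : E m p (v 2) (v 5). Proof. by rewrite Ev. Qed.
Lemma EP26 : E m p (v 2) (v 6). Proof. by rewrite Ev. Qed.

Lemma Etree : is_tree (E m p).
Proof.
split; first by split; [exact: Esym | exact: Eirr].
split; last exact: (acyc Esym EH2 EH3 EP31 EP10 EP02 EP25 EP26).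
have h0 : forall x, connect (E m p) x (v 0).
  move=> x.
  have : [|| nat_of_ord x == 0, E m p x (v 0), E m p x (v 1) | E m p x (v 2)].
    rewrite /E !inordK //; move: hp; rewrite /adjs /adj; clear; lia.
  case/or4P => h.
  - have -> : x = v 0 by apply: val_inj; rewrite /= inordK // (eqP h).
    exact: connect0.
  - exact: connect1.
  - by apply: connect_trans (connect1 h) (connect1 EP10).
  - by apply: connect_trans (connect1 h) (connect1 (etrans (Esym _ _) EP02)).
move=> x y; apply: connect_trans (h0 x) _.
by rewrite (sym_connect_sym Esym).
Qed.
End Trees.


Definition fpsi N k := if k == 1 then N else if k <= 3 then 2 else if k <= 5 then 1 else 0.

Lemma Epsi m p k : (p == 1) || (p == 2) -> 1 <= k -> psi (E m p) k = fpsi m.+4.+3 k.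
Proof.
move=> hp hk; rewrite /fpsi.
case: eqP => [->|k1]; first exact: psi1.
case: leqP => h3.
  apply: psi23; try lia.
  all: try by [exact: Esym | apply: EH1 hp | apply: EH2 hp | apply: EH3 hp | exact: EP31 | exact: EP10 | exact: EP02 | exact: EP25 | exact: EP26 ].
case: leqP => h5.
  apply: psi45; try lia.
  all: try by [exact: Esym | apply: EH1 hp | apply: EH2 hp | apply: EH3 hp | exact: EP31 | exact: EP10 | exact: EP02 | exact: EP25 | exact: EP26 ].
apply: psi6; try lia.
all: try by [exact: Esym | apply: EH1 hp | apply: EH2 hp | apply: EH3 hp | exact: EP31 | exact: EP10 | exact: EP02 | exact: EP25 | exact: EP26 ].
Qed.

Definition Pr (T : finType) (e : rel T) : Prop :=
  exists x y z, [/\ e x y, e y z, (forall w, e z w -> w = y) & (forall w, e y w -> w = x \/ w = z)].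

Lemma Pr_iso (T1 T2 : finType) (e1 : rel T1) (e2 : rel T2) : isomorphic e1 e2 -> Pr e1 -> Pr e2.
Proof.
case=> f [[g fK gK] hf] [x [y [z [exy eyz Hz Hy]]]].
exists (f x), (f y), (f z); split; rewrite -?hf //.
  by move=> w; rewrite -[w]gK -hf => /Hz ->.
by move=> w; rewrite -[w]gK -hf => /Hy [->|->]; [left|right].
Qed.

Lemma Pr_E2 m : Pr (E m 2).
Proof.
exists (inord 0), (inord 1), (inord 3); split; rewrite ?Ev //.
  by move=> w; rewrite /E inordK // => h; apply: val_inj; rewrite /= inordK //; move: h; rewrite /adjs /adj; lia.
move=> w; rewrite /E inordK // => h.
have : nat_of_ord w = 0 \/ nat_of_ord w = 3 by move: h; rewrite /adjs /adj; lia.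
by case=> hw; [left|right]; apply: val_inj; rewrite /= inordK.
Qed.

Lemma nPr_E1 m : ~ Pr (E m 1).
Proof.
move=> [x [y [z [exy eyz Hz Hy]]]].
have hz i : i <= m.+4.+2 -> adjs 1 z i -> i = nat_of_ord y.
  move=> hi h; have := Hz (inord i); rewrite /E inordK // => /(_ h) /(congr1 val).
  by rewrite /= inordK.
have hy i : i <= m.+4.+2 -> adjs 1 y i -> i = nat_of_ord x \/ i = nat_of_ord z.
  move=> hi h; have := Hy (inord i); rewrite /E inordK // => /(_ h) [/(congr1 val) e1|/(congr1 val) e1]; [left|right];
  by rewrite -e1 /= inordK.
have := hz 0 isT; have := hz 3 isT; have := hz 5 isT.
have := hy 0 isT; have := hy 3 isT; have := hy 4 isT; have := hy 5 isT; have := hy 6 isT.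
move: eyz; rewrite /E /adjs /adj.
clear; lia.
Qed.

Theorem mainTheorem8 (n : nat) (hn : 7 <= n) :
  exists e1 e2 : rel 'I_n,
    [/\ is_tree e1, is_tree e2,
        (forall k, 1 <= k <= n -> psi e1 k = psi e2 k)
      & ~ isomorphic e1 e2].
Proof.
have [m hm] : exists m, n = m.+4.+3 by exists (n - 7); lia.
subst n.
exists (E m 2), (E m 1); split.
- exact: Etree.
- exact: Etree.
- by move=> k /andP[hk _]; rewrite !Epsi.
- move=> hiso; apply: (@nPr_E1 m); exact: Pr_iso hiso (Pr_E2 m).
Qed.
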